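(* Every well-graded $\cup$-closed family of finite sets is a partial learning space. The converse is false: there exists a partial learning space which is neither $\cup$-closed nor well-graded.
   Context: $d(K,L)=|K\triangle L|$ with $\triangle$ the symmetric difference. A family $\mathcal{K}$ is well-graded if for any two distinct $K,L\in\mathcal{K}$ there is a sequence $K_0=K,K_1,\dots,K_n=L$ in $\mathcal{K}$ with $n=d(K,L)$ and $d(K_i,K_{i+1})=1$. A family is $\cup$-closed if the union of any non-empty subfamily belongs to it. A partial knowledge structure is a family $\mathcal{F}$ of subsets of a set $Q$ with $Q=\bigcup\mathcal{F}\in\mathcal{F}$. A partial learning space is a partial knowledge structure $\mathcal{F}$ satisfying: [L1] for $K\subset L$ in $\mathcal{F}$ with $|L\setminus K|=n$ there is a chain $K=K_0\subset K_1\subset\dots\subset K_n=L$ with $K_{i+1}=K_i\cup\{q_i\}\in\mathcal{F}$, $q_i\notin K_i$; [L2] if $K\subset L$ are in $\mathcal{F}$ and $K\cup\{q\}\in\mathcal{F}$ with $q\notin K$, then $L\cup\{q\}\in\mathcal{F}$. (The family $\{\varnothing\}$ counts as well-graded, $\cup$-closed, and a partial learning space.) *)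

(* Defs.v *)
From mathcomp Require Import all_boot finmap.
Set Implicit Arguments. Unset Strict Implicit. Unset Printing Implicit Defensive.
Local Open Scope fset_scope.

Section Families.
Variable T : choiceType.

Definition family := {fset T} -> Prop.

Definition fdist (K L : {fset T}) : nat := #|` ((K `\` L) `|` (L `\` K)) |.

Definition is_union (S : family) (U : {fset T}) : Prop :=
  forall x : T, x \in U <-> exists2 X, S X & x \in X.

Definition well_graded (F : family) : Prop :=
  forall K L, F K -> F L -> K <> L ->
    exists f : nat -> {fset T},
      [/\ f 0 = K, f (fdist K L) = L,
          (forall i, i <= fdist K L -> F (f i)) &
          (forall i, i < fdist K L -> fdist (f i) (f i.+1) = 1)].

Definition union_closed (F : family) : Prop :=
  forall S : family, (forall X, S X -> F X) -> (exists X, S X) ->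
    exists2 U, F U & is_union S U.

Definition partial_knowledge_structure (F : family) : Prop :=
  exists2 Q, F Q & is_union F Q.

Definition axiom_L1 (F : family) : Prop :=
  forall K L, F K -> F L -> K `<` L ->
    exists (f : nat -> {fset T}) (q : nat -> T),
      [/\ f 0 = K, f #|` L `\` K| = L &
          forall i, i < #|` L `\` K| ->
            [/\ q i \notin f i, f i.+1 = f i `|` [fset q i] & F (f i.+1)]].

Definition axiom_L2 (F : family) : Prop :=
  forall K L (q : T), F K -> F L -> K `<` L ->
    q \notin K -> F (K `|` [fset q]) -> F (L `|` [fset q]).

Definition partial_learning_space (F : family) : Prop :=
  [/\ partial_knowledge_structure F, axiom_L1 F & axiom_L2 F].

End Families.

(* Main.v *)
Require Import Defs.
From mathcomp Require Import all_boot finmap.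
From mathcomp Require Import zify.
Set Implicit Arguments. Unset Strict Implicit. Unset Printing Implicit Defensive.
Local Open Scope fset_scope.

Section P1.
Variable T : choiceType.
Implicit Types A B C K L M : {fset T}.

Definition sd A B := (A `\` B) `|` (B `\` A).

Lemma in_sd A B z : (z \in sd A B) = ((z \in A) != (z \in B)).
Proof. rewrite !inE; by case: (z \in A); case: (z \in B). Qed.

Lemma fdistE A B : fdist A B = #|` sd A B|.
Proof. by []. Qed.

Lemma fdist_tri A B C : fdist A C <= fdist A B + fdist B C.
Proof.
rewrite !fdistE; apply: leq_trans (fsubset_leq_card (_ : _ `<=` sd A B `|` sd B C)) _.
  apply/fsubsetP => z; rewrite in_fsetU !in_sd.
  by case: (z \in A); case: (z \in B); case: (z \in C).
by rewrite cardfsU leq_subr.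
Qed.

Lemma fdist_refl A : fdist A A = 0.
Proof.
rewrite fdistE (_ : sd A A = fset0) ?cardfs0 //.
by apply/fsetP => z; rewrite in_sd inE; case: (z \in A).
Qed.

Lemma fdist_eq0 A B : fdist A B = 0 -> A = B.
Proof.
rewrite fdistE => /cardfs0_eq H; apply/fsetP => z.
have := in_sd A B z; rewrite H inE.
by case: (z \in A); case: (z \in B).
Qed.

Lemma fdist_sub K L : K `<=` L -> fdist K L = #|` L `\` K|.
Proof.
move=> /fsubsetP H; rewrite fdistE; congr (#|` _|).
apply/fsetP => z; rewrite in_sd in_fsetD.
by have := H z; case: (z \in K); case: (z \in L) => // ->.
Qed.

Lemma path_bound L d (f : nat -> {fset T}) :
  f d = L -> (forall i, i < d -> fdist (f i) (f i.+1) = 1) ->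
  forall j, j <= d -> fdist (f (d - j)) L <= j.
Proof.
move=> HL Hs; elim=> [|j IH] Hj.
  by rewrite subn0 HL fdist_refl.
apply: leq_trans (fdist_tri _ (f (d - j)) _) _.
have -> : d - j = (d - j.+1).+1 by lia.
rewrite Hs; last by lia.
have -> : (d - j.+1).+1 = d - j by lia.
by rewrite add1n ltnS IH // ltnW.
Qed.

Lemma wg_step (F : {fset T} -> Prop) : well_graded F ->
  forall K L, F K -> F L -> K `<` L ->
  exists2 q, q \in L `\` K & F (K `|` [fset q]).
Proof.
move=> Hwg K L FK FL Hp.
have HKL : K <> L by move=> E; move: Hp; rewrite E fproperEneq eqxx.
have Hsub := fproper_sub Hp.
have Hsub' := fsubsetP Hsub.
have [f [f0 fd Ff Hs]] := Hwg K L FK FL HKL.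
set d := fdist K L in f0 fd Ff Hs.
have d0 : 0 < d by rewrite lt0n; apply/eqP => /fdist_eq0.
have FM : F (f 1) by apply: Ff.
have H1 : fdist K (f 1) = 1 by rewrite -f0; apply: Hs.
have HML : fdist (f 1) L <= d - 1.
  have := path_bound fd Hs (j := d - 1); rewrite (_ : d - (d - 1) = 1); last by lia.
  by apply; lia.
move: H1; rewrite fdistE => /eqP /cardfs1P [x Hx].
have Hz : forall z, ((z \in K) != (z \in f 1)) = (z == x).
  by move=> z; rewrite -in_sd Hx inE.
have [xK|xK] := boolP (x \in K); last have [xL|xL] := boolP (x \in L).
-
  exfalso.
  have Hsb : x |` sd K L `<=` sd (f 1) L.
    apply/fsubsetP => z; rewrite !inE.
    have := Hz z; have := Hsub' z.
    case: (z =P x) => [->|_]; first by rewrite xK (Hsub' _ xK); case: (x \in f 1).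
    by case: (z \in K); case: (z \in L); case: (z \in f 1).
  have := fsubset_leq_card Hsb; rewrite cardfsU1 in_sd xK (Hsub' _ xK) /=.
  rewrite -fdistE -fdistE -/d; lia.
- exists x; first by rewrite inE xK xL.
  suff -> : K `|` [fset x] = f 1 by [].
  apply/fsetP => z; rewrite !inE; have := Hz z.
  case: (z =P x) => [->|_]; first by rewrite (negPf xK); case: (x \in f 1).
  by case: (z \in K); case: (z \in f 1).
- exfalso.
  have Hsb : x |` sd K L `<=` sd (f 1) L.
    apply/fsubsetP => z; rewrite !inE.
    have := Hz z; have := Hsub' z.
    case: (z =P x) => [->|_]; first by rewrite (negPf xK) (negPf xL); case: (x \in f 1).
    by case: (z \in K); case: (z \in L); case: (z \in f 1).
  have := fsubset_leq_card Hsb; rewrite cardfsU1 in_sd (negPf xK) (negPf xL) /=.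
  rewrite -fdistE -fdistE -/d; lia.
Qed.

Lemma L1_of_step (F : {fset T} -> Prop) :
  (forall K L, F K -> F L -> K `<` L ->
     exists2 q, q \in L `\` K & F (K `|` [fset q])) -> axiom_L1 F.
Proof.
move=> Hst K L FK FL Hp.
have [t _] : exists t, t \in L.
  case: (fset_0Vmem L) => [E|[x Hx]]; last by exists x. move: Hp; rewrite E.
  by rewrite fproperEneq fsubset0 => /andP [/negP].
suff : forall n K, F K -> K `<=` L -> #|` L `\` K| = n ->
  exists (f : nat -> {fset T}) (q : nat -> T),
      [/\ f 0 = K, f n = L &
          forall i, i < n ->
            [/\ q i \notin f i, f i.+1 = f i `|` [fset q i] & F (f i.+1)]].
  by move=> H; apply: H => //; apply: fproper_sub.
clear Hp FK K; elim=> [|n IH] K FK Hs Hc.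
  exists (fun _ => K), (fun _ => t); split => //.
  by apply/eqP; rewrite eqEfsubset Hs -fsetD_eq0 -cardfs_eq0 Hc.
have Hp' : K `<` L.
  rewrite fproperEneq Hs andbT; apply/eqP => E.
  by move: Hc; rewrite E fsetDv cardfs0.
have [q Hq FK'] := Hst K L FK FL Hp'.
have Hs' : K `|` [fset q] `<=` L.
  by rewrite fsubUset Hs fsub1set; move: Hq; rewrite inE => /andP [].
have Hc' : #|` L `\` (K `|` [fset q])| = n.
  rewrite -fsetDDl; move: Hc; rewrite (cardfsD1 q) Hq add1n => -[].
  by [].
have [f [q' [f0 fn Hf]]] := IH _ FK' Hs' Hc'.
exists (fun i => if i is i'.+1 then f i' else K).
exists (fun i => if i is i'.+1 then q' i' else q).
split => //; case=> [_|i Hi]; last by apply: Hf.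
by rewrite f0; split => //; move: Hq; rewrite inE => /andP [].
Qed.

End P1.

Lemma part1 (T : choiceType) (F : {fset T} -> Prop) :
  (exists K, F K) -> well_graded F -> union_closed F ->
  partial_learning_space F.
Proof.
move=> Hne Hwg Huc; split.
- have [U FU HU] := Huc F (fun X H => H) Hne.
  by exists U.
- by apply: L1_of_step; apply: wg_step.
- move=> K L q FK FL Hp _ FKq.
  have [U FU HU] := Huc (fun X => X = L \/ X = K `|` [fset q])
    (fun X H => match H with or_introl E => eq_ind_r F FL E | or_intror E => eq_ind_r F FKq E end)
    (ex_intro _ L (or_introl erefl)).
  suff -> : L `|` [fset q] = U by [].
  have Hs := fsubsetP (fproper_sub Hp).
  apply/fsetP => z; apply/idP/idP.
  + rewrite !inE => /orP [zL|zq]; apply/(HU z).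
      by exists L; [left|].
    by exists (K `|` [fset q]); [right|rewrite !inE zq orbT].
  + move=> /(HU z) [X [->|->]]; rewrite !inE; first by move->.
    by move=> /orP [/Hs ->|->]; rewrite ?orbT.
Qed.

Definition Q3 : {fset nat} := [fset 0; 1; 2].
Definition pat (b0 b1 b2 : bool) := (b0 || b1) && (b2 || (b0 != b1)).
Definition Fex (X : {fset nat}) : Prop :=
  X `<=` Q3 /\ pat (0 \in X) (1 \in X) (2 \in X).

Lemma inQ3 z : z \in Q3 -> [\/ z = 0, z = 1 | z = 2].
Proof. rewrite !inE; case: z => [|[|[|z]]] //= _; by constructor. Qed.

Lemma proper_wit (K L : {fset nat}) : K `<` L -> exists2 y, y \in L & y \notin K.
Proof.
rewrite fproperE => /andP [_ /fsubsetPn [y yL yK]]; by exists y.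
Qed.

Lemma part2 :
  exists F : {fset nat} -> Prop,
      [/\ partial_learning_space F, ~ union_closed F & ~ well_graded F].
Proof.
exists Fex; split.
- split.
  + exists Q3; first by split; [exact: fsubset_refl|rewrite /pat !inE].
    move=> x; split.
      by move=> xQ; exists Q3 => //; split; [exact: fsubset_refl|rewrite /pat !inE].
    by move=> [X [/fsubsetP HX _] xX]; apply: HX.
  + apply: L1_of_step => K L [/fsubsetP HK PK] [/fsubsetP HL PL] Hp.
    have Hs := fsubsetP (fproper_sub Hp).
    have [y yL yK] := proper_wit Hp.
    have H0 : (0 \in K) ==> (0 \in L) by apply/implyP/Hs.
    have H1 : (1 \in K) ==> (1 \in L) by apply/implyP/Hs.
    have H2 : (2 \in K) ==> (2 \in L) by apply/implyP/Hs.
    have [||] : [\/ (2 \notin K), (2 \in K) && (0 \notin K) | (2 \in K) && (0 \in K)].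
      by case: (2 \in K); case: (0 \in K); constructor.
    * move=> n2; exists 2; first rewrite inE n2 /=.
        move: PK PL H0 H1 H2; have := inQ3 (HL _ yL); case=> Ey; subst y;
        move: yL yK n2; rewrite /pat;
        by case: (0 \in K); case: (1 \in K); case: (2 \in K); case: (0 \in L); case: (1 \in L); case: (2 \in L).
      split; first by rewrite fsubUset fsub1set !inE andbT; apply/fsubsetP.
      move: PK n2; rewrite /pat !inE /=.
      by case: (0 \in K); case: (1 \in K); case: (2 \in K).
    * move=> /andP [i2 n0]; exists 0.
        rewrite inE n0 /=.
        move: PK PL H0 H1 H2 i2 n0; have := inQ3 (HL _ yL); case=> Ey; subst y;
        move: yL yK; rewrite /pat;
        by case: (0 \in K); case: (1 \in K); case: (2 \in K); case: (0 \in L); case: (1 \in L); case: (2 \in L).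
      split; first by rewrite fsubUset fsub1set !inE andbT; apply/fsubsetP.
      move: PK i2 n0; rewrite /pat !inE /=.
      by case: (0 \in K); case: (1 \in K); case: (2 \in K).
    * move=> /andP [i2 i0]; exists 1.
        have n1 : 1 \notin K.
          by have := inQ3 (HL _ yL); case=> Ey; subst y; rewrite ?i0 ?i2 in yK.
        rewrite inE n1 /=.
        move: PK PL H0 H1 H2 i2 i0 n1; have := inQ3 (HL _ yL); case=> Ey; subst y;
        move: yL yK; rewrite /pat;
        by case: (0 \in K); case: (1 \in K); case: (2 \in K); case: (0 \in L); case: (1 \in L); case: (2 \in L).
      split; first by rewrite fsubUset fsub1set !inE andbT; apply/fsubsetP.
      move: PK i2 i0; rewrite /pat !inE /=.
      by case: (0 \in K); case: (1 \in K); case: (2 \in K).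
  + move=> K L q [/fsubsetP HK PK] [/fsubsetP HL PL] Hp qK [/fsubsetP HKq PKq].
    have Hs := fsubsetP (fproper_sub Hp).
    have [y yL yK] := proper_wit Hp.
    have H0 : (0 \in K) ==> (0 \in L) by apply/implyP/Hs.
    have H1 : (1 \in K) ==> (1 \in L) by apply/implyP/Hs.
    have H2 : (2 \in K) ==> (2 \in L) by apply/implyP/Hs.
    have qQ : q \in Q3 by apply: HKq; rewrite !inE eqxx orbT.
    split.
      rewrite fsubUset fsub1set qQ andbT; exact/fsubsetP.
    move: PKq; rewrite /pat !inE.
    move: PK PL H0 H1 H2 qK; have := inQ3 (HL _ yL); case=> Ey; subst y;
    have := inQ3 qQ; case=> Eq; subst q; move: yL yK; rewrite /pat /=;
    by case: (0 \in K); case: (1 \in K); case: (2 \in K);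
       case: (0 \in L); case: (1 \in L); case: (2 \in L).
- move=> Huc.
  have F0 : Fex [fset 0] by split; [rewrite fsub1set !inE|rewrite /pat !inE].
  have F1 : Fex [fset 1] by split; [rewrite fsub1set !inE|rewrite /pat !inE].
  have [U [_ PU] HU] := Huc (fun X => X = [fset 0] \/ X = [fset 1])
    (fun X H => match H with
       | or_introl E => eq_ind_r Fex F0 E
       | or_intror E => eq_ind_r Fex F1 E end)
    (ex_intro _ [fset 0] (or_introl erefl)).
  have u0 : 0 \in U by apply/(HU 0); exists [fset 0]; [left|rewrite inE].
  have u1 : 1 \in U by apply/(HU 1); exists [fset 1]; [right|rewrite inE].
  have u2 : 2 \notin U.
    by apply/negP => /(HU 2) [X [->|->]]; rewrite inE.
  by move: PU; rewrite /pat u0 u1 (negPf u2).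
- move=> Hwg.
  have F0 : Fex [fset 0] by split; [rewrite fsub1set !inE|rewrite /pat !inE].
  have F1 : Fex [fset 1] by split; [rewrite fsub1set !inE|rewrite /pat !inE].
  have Hne : [fset 0] <> [fset 1] :> {fset nat}.
    by move=> E; have := fset11 0; rewrite E inE.
  have [f [f0 fd Ff Hs]] := Hwg _ _ F0 F1 Hne.
  have d2 : fdist [fset 0] [fset 1] = 2.
    rewrite fdistE (_ : sd _ _ = [fset 0; 1]) ?cardfs2 //.
    by apply/fsetP => z; rewrite in_sd !inE; case: (z == 0) / eqP => [->|]; case: (z == 1).
  rewrite d2 in fd Ff Hs.
  have [_ PM] := Ff 1 isT.
  have := Hs 0 isT; have := Hs 1 isT; rewrite f0 fd !fdistE.
  move=> /eqP /cardfs1P [y Hy] /eqP /cardfs1P [x Hx].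
  have Hz : forall z, ((z \in [fset 0]) != (z \in f 1)) = (z == x).
    by move=> z; rewrite -in_sd Hx inE.
  have Hw : forall z, ((z \in f 1) != (z \in [fset 1])) = (z == y).
    by move=> z; rewrite -in_sd Hy inE.
  have := Hz 0; have := Hz 1; have := Hz 2; have := Hw 0; have := Hw 1; have := Hw 2.
  move: PM; rewrite /pat !inE /=.
  case: (0 \in f 1); case: (1 \in f 1); case: (2 \in f 1) => //=;
  by case: y {Hy Hw} => [|[|[|y]]]; case: x {Hx Hz} => [|[|[|x]]].
Qed.

Theorem lemma5 :
  (forall (T : choiceType) (F : {fset T} -> Prop),
      (exists K, F K) -> well_graded F -> union_closed F ->
      partial_learning_space F)
  /\
  (exists F : {fset nat} -> Prop,
      [/\ partial_learning_space F, ~ union_closed F & ~ well_graded F]).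
Proof. split; [exact: part1 | exact: part2]. Qed.
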